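(* Let $f:[0,1]\to[0,1]$, $f(x)=\frac{1-x}{1+x}$. Then $f$ is a bijection and $f\circ T\circ f^{-1}=T_E$ on $[0,1]$, where $T$ is the OOCF map and $T_E$ is the even integer continued fraction map.
   Context: For integers $k\ge1$ put $B(k+1,-1)=\left[\frac{k-1}{k},\frac{2k-1}{2k+1}\right]$ and $B(k,1)=\left[\frac{2k-1}{2k+1},\frac{k}{k+1}\right]$. The OOCF map $T:[0,1]\to[0,1]$ is $T(x)=\frac{kx-(k-1)}{k-(k+1)x}$ for $x\in B(k+1,-1)$, $T(x)=\frac{k-(k+1)x}{kx-(k-1)}$ for $x\in B(k,1)$ ($k\ge1$), and $T(1)=1$. The EICF map $T_E:[0,1]\to[0,1]$ is $T_E(y)=\frac1y-2k$ for $y\in\left[\frac1{2k+1},\frac1{2k}\right]$, $T_E(y)=2k-\frac1y$ for $y\in\left[\frac1{2k},\frac1{2k-1}\right]$ ($k\ge1$), and $T_E(0)=0$. *)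

(* Defs.v *)
From Stdlib Require Import Reals.
Open Scope R_scope.

Definition f_conj (x : R) : R := (1 - x) / (1 + x).

(* T : [0,1] -> [0,1] is the OOCF map: the defining equations of the paper,
   piece by piece (the pieces agree on shared endpoints). Values outside
   [0,1] are irrelevant and left unconstrained. *)
Definition is_OOCF_map (T : R -> R) : Prop :=
  (forall (k : nat) (x : R), (1 <= k)%nat ->
     (INR k - 1) / INR k <= x <= (2 * INR k - 1) / (2 * INR k + 1) ->
     T x = (INR k * x - (INR k - 1)) / (INR k - (INR k + 1) * x)) /\
  (forall (k : nat) (x : R), (1 <= k)%nat ->
     (2 * INR k - 1) / (2 * INR k + 1) <= x <= INR k / (INR k + 1) ->
     T x = (INR k - (INR k + 1) * x) / (INR k * x - (INR k - 1))) /\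
  T 1 = 1.

Definition is_EICF_map (TE : R -> R) : Prop :=
  (forall (k : nat) (y : R), (1 <= k)%nat ->
     1 / (2 * INR k + 1) <= y <= 1 / (2 * INR k) ->
     TE y = 1 / y - 2 * INR k) /\
  (forall (k : nat) (y : R), (1 <= k)%nat ->
     1 / (2 * INR k) <= y <= 1 / (2 * INR k - 1) ->
     TE y = 2 * INR k - 1 / y) /\
  TE 0 = 0.

(* Main.v *)
Require Import Defs.
From Stdlib Require Import Reals Lra Lia ZArith.
Open Scope R_scope.

Lemma f_inv x : 0 <= x <= 1 -> f_conj (f_conj x) = x.
Proof. intros H. unfold f_conj. field. split; lra. Qed.

Lemma inv_le a b : 0 < a -> a <= b -> 1 / b <= 1 / a.
Proof. intros. unfold Rdiv. rewrite !Rmult_1_l. apply Rinv_le_contravar; lra. Qed.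

Lemma Rle_div_l' a b c : 0 < c -> a <= b * c -> a / c <= b.
Proof. intros. apply Rmult_le_reg_r with c; [lra|]. unfold Rdiv.
  rewrite Rmult_assoc, Rinv_l by lra. lra. Qed.

Lemma Rle_div_r' a b c : 0 < c -> a * c <= b -> a <= b / c.
Proof. intros. apply Rmult_le_reg_r with c; [lra|]. unfold Rdiv.
  rewrite Rmult_assoc, Rinv_l by lra. lra. Qed.

Lemma nat_floor z : 1 <= z -> exists m : nat, (1 <= m)%nat /\ INR m <= z < INR m + 1.
Proof.
  intros Hz. destruct (base_Int_part z) as [H1 H2].
  remember (Int_part z) as p eqn:Ep.
  assert (Hp : (0 < p)%Z). { apply lt_IZR. simpl. lra. }
  exists (Z.to_nat p). rewrite INR_IZR_INZ, Z2Nat.id by lia. split; [lia|lra].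
Qed.

Lemma key x (T TE : R -> R) (HT : is_OOCF_map T) (HTE : is_EICF_map TE) :
  0 <= x < 1 -> f_conj (T x) = TE (f_conj x).
Proof.
  intros Hx. destruct HT as [T1 [T2 T3]]. destruct HTE as [E1 [E2 E3]].
  set (z := (1 + x) / (1 - x)).
  assert (Hz : z * (1 - x) = 1 + x) by (unfold z; field; lra).
  assert (Hz1 : 1 <= z).
  { unfold z. apply Rmult_le_reg_r with (1 - x); [lra|]. rewrite Rmult_1_l.
    unfold Rdiv. rewrite Rmult_assoc, Rinv_l by lra. lra. }
  assert (Hy : f_conj x = 1 / z) by (unfold f_conj, z; field; lra).
  destruct (nat_floor z Hz1) as [m [Hm [Hm1 Hm2]]].
  destruct (Nat.Even_or_Odd m) as [[k Hk] | [k Hk]]; subst m.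
  -
    assert (Hk1 : (1 <= k)%nat) by lia.
    assert (HK : 1 <= INR k) by (apply (le_INR 1); lia).
    rewrite mult_INR in Hm1, Hm2. simpl INR in Hm1, Hm2.
    set (K := INR k) in *.
    assert (HzK : z = (1+x)/(1-x)) by reflexivity.
    rewrite (T2 k x Hk1).
    2:{ fold K. split.
        - apply Rle_div_l'; [lra|]. nra.
        - apply Rle_div_r'; [lra|]. nra. }
    rewrite Hy, (E1 k (1/z) Hk1).
    2:{ fold K. split; apply inv_le; lra. }
    fold K. unfold f_conj. rewrite HzK.
    assert (K * x - (K - 1) > 0) by nra.
    field. repeat split; try lra; nra.
  - assert (Hk1 : (1 <= k + 1)%nat) by lia.
    assert (HK : 1 <= INR (k+1)) by (apply (le_INR 1); lia).
    rewrite plus_INR, mult_INR in Hm1, Hm2. simpl INR in Hm1, Hm2.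
    rewrite plus_INR in HK. simpl INR in HK.
    set (K := INR k + 1) in *. assert (HKd : K = INR k + 1) by reflexivity.
    assert (HzK : z = (1+x)/(1-x)) by reflexivity.
    rewrite (T1 (k+1)%nat x Hk1).
    2:{ rewrite plus_INR; simpl INR; fold K. split.
        - apply Rle_div_l'; [lra|].
          assert (0 <= (z - (2*K-1))*(1-x)) by (apply Rmult_le_pos; lra). nra.
        - apply Rle_div_r'; [lra|].
          assert (0 <= (2*K - z)*(1-x)) by (apply Rmult_le_pos; lra). nra. }
    rewrite Hy, (E2 (k+1)%nat (1/z) Hk1).
    2:{ rewrite plus_INR; simpl INR; fold K. split; apply inv_le; lra. }
    rewrite plus_INR; simpl INR; fold K. unfold f_conj. rewrite HzK.
    assert (K - (K + 1) * x > 0) by nra.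
    field. repeat split; try lra; nra.
Qed.

Theorem mainTheorem5 (T TE : R -> R) (HT : is_OOCF_map T) (HTE : is_EICF_map TE) :
  (* f is a bijection of [0,1] onto [0,1] *)
  ((forall x, 0 <= x <= 1 -> 0 <= f_conj x <= 1) /\
   (forall x y, 0 <= x <= 1 -> 0 <= y <= 1 -> f_conj x = f_conj y -> x = y) /\
   (forall y, 0 <= y <= 1 -> exists x, 0 <= x <= 1 /\ f_conj x = y)) /\
  (* f o T o f^{-1} = T_E on [0,1]: for y in [0,1] and x = f^{-1}(y) *)
  (forall x y, 0 <= x <= 1 -> 0 <= y <= 1 -> f_conj x = y -> f_conj (T x) = TE y).
Proof.
  assert (Hr : forall x, 0 <= x <= 1 -> 0 <= f_conj x <= 1).
  { intros x Hx. unfold f_conj. split.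
    - apply Rle_div_r'; lra.
    - apply Rle_div_l'; lra. }
  split; [split; [exact Hr | split] |].
  - intros x y Hx Hy E. rewrite <- (f_inv x Hx), <- (f_inv y Hy), E. reflexivity.
  - intros y Hy. exists (f_conj y). split; [apply Hr; auto | apply f_inv; auto].
  - intros x y Hx Hy E. subst y.
    destruct (Req_dec x 1) as [->|Hx1].
    + destruct HT as [_ [_ T3]]. destruct HTE as [_ [_ E3]].
      rewrite T3. unfold f_conj. replace ((1-1)/(1+1)) with 0 by field.
      rewrite E3. field.
    + apply key; auto; lra.
Qed.
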